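(* Let $A_1,\dots,A_{12}$ be the vertices of a regular icosahedron in $\mathbb R^3$ with centre $O$, and let $\Gamma$ be a sphere centred at $O$. For each $\lambda\in\{2,4,6\}$ the sum $\sum_{i=1}^{12}|MA_i|^{\lambda}$ does not depend on the position of $M\in\Gamma$.
   Context: $|MA|$ denotes Euclidean distance. *)

(* Defs.v *)
From Stdlib Require Import Reals Lra List.
Import ListNotations.
Open Scope R_scope.

Definition point : Type := (R * R * R)%type.

Definition px (p : point) : R := fst (fst p).
Definition py (p : point) : R := snd (fst p).
Definition pz (p : point) : R := snd p.

Definition mkpt (x y z : R) : point := (x, y, z).

Definition dot (p q : point) : R := px p * px q + py p * py q + pz p * pz q.

Definition padd (p q : point) : point := mkpt (px p + px q) (py p + py q) (pz p + pz q).
Definition psub (p q : point) : point := mkpt (px p - px q) (py p - py q) (pz p - pz q).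
Definition pscale (s : R) (p : point) : point := mkpt (s * px p) (s * py p) (s * pz p).

Definition dist3 (p q : point) : R := sqrt (dot (psub p q) (psub p q)).

Definition phi : R := (1 + sqrt 5) / 2.

(* The 12 vertices of the standard regular icosahedron centred at the origin:
   cyclic permutations of (0, +-1, +-phi). *)
Definition std_icosa_list : list point :=
  [ mkpt 0 1 phi; mkpt 0 1 (- phi); mkpt 0 (-1) phi; mkpt 0 (-1) (- phi);
    mkpt 1 phi 0; mkpt 1 (- phi) 0; mkpt (-1) phi 0; mkpt (-1) (- phi) 0;
    mkpt phi 0 1; mkpt phi 0 (-1); mkpt (- phi) 0 1; mkpt (- phi) 0 (-1) ].

Definition std_icosa (j : nat) : point := nth j std_icosa_list (mkpt 0 0 0).

(* An orthogonal transformation of R^3 (fixes the origin, preserves the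
   inner product; such maps are automatically linear). *)
Definition orthogonal_map (L : point -> point) : Prop :=
  forall x y : point, dot (L x) (L y) = dot x y.

(* A_0, ..., A_11 are (in some order) the vertices of a regular icosahedron
   with centre O: they are the image of the standard icosahedron under a
   similarity x |-> O + s * L x with s > 0 and L orthogonal, and the
   labelling is a bijection onto the 12 vertices. *)
Definition regular_icosahedron (A : nat -> point) (O : point) : Prop :=
  exists (s : R) (L : point -> point),
    0 < s /\ orthogonal_map L /\
    (forall i, (i < 12)%nat ->
       exists j, (j < 12)%nat /\ A i = padd O (pscale s (L (std_icosa j)))) /\
    (forall i k, (i < 12)%nat -> (k < 12)%nat -> A i = A k -> i = k).

(* sum_{i=1}^{12} |M A_i|^lam  (indices shifted to 0..11). *)
Definition icosa_power_sum (A : nat -> point) (M : point) (lam : nat) : R :=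
  sum_f_R0 (fun i => (dist3 M (A i)) ^ lam) 11.

(* Main.v *)
Require Import Defs.
From Stdlib Require Import Reals Lra Psatz List Permutation Lia.
Import ListNotations.
Open Scope R_scope.

Lemma complete (a1 a2 a3 b1 b2 b3 c1 c2 c3 x y z : R)
  (H11 : a1*a1+a2*a2+a3*a3 = 1) (H22 : b1*b1+b2*b2+b3*b3 = 1)
  (H33 : c1*c1+c2*c2+c3*c3 = 1) (H12 : a1*b1+a2*b2+a3*b3 = 0)
  (H13 : a1*c1+a2*c2+a3*c3 = 0) (H23 : b1*c1+b2*c2+b3*c3 = 0) :
  (x*a1+y*a2+z*a3)^2+(x*b1+y*b2+z*b3)^2+(x*c1+y*c2+z*c3)^2 = x*x+y*y+z*z.
Proof.
  set (u1 := x*a1+y*a2+z*a3). set (u2 := x*b1+y*b2+z*b3). set (u3 := x*c1+y*c2+z*c3).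
  set (wx := x - (u1*a1+u2*b1+u3*c1)).
  set (wy := y - (u1*a2+u2*b2+u3*c2)).
  set (wz := z - (u1*a3+u2*b3+u3*c3)).
  assert (E1 : a1*wx+a2*wy+a3*wz = 0).
  { assert (H : a1*wx+a2*wy+a3*wz = u1*(1-(a1*a1+a2*a2+a3*a3)) - u2*(a1*b1+a2*b2+a3*b3) - u3*(a1*c1+a2*c2+a3*c3))
      by (unfold wx, wy, wz, u1, u2, u3; ring).
    rewrite H11, H12, H13 in H; lra. }
  assert (E2 : b1*wx+b2*wy+b3*wz = 0).
  { assert (H : b1*wx+b2*wy+b3*wz = u2*(1-(b1*b1+b2*b2+b3*b3)) - u1*(a1*b1+a2*b2+a3*b3) - u3*(b1*c1+b2*c2+b3*c3))
      by (unfold wx, wy, wz, u1, u2, u3; ring).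
    rewrite H22, H12, H23 in H; lra. }
  assert (E3 : c1*wx+c2*wy+c3*wz = 0).
  { assert (H : c1*wx+c2*wy+c3*wz = u3*(1-(c1*c1+c2*c2+c3*c3)) - u1*(a1*c1+a2*c2+a3*c3) - u2*(b1*c1+b2*c2+b3*c3))
      by (unfold wx, wy, wz, u1, u2, u3; ring).
    rewrite H33, H13, H23 in H; lra. }
  set (d := a1*(b2*c3-b3*c2) - a2*(b1*c3-b3*c1) + a3*(b1*c2-b2*c1)).
  assert (Hd : d*d = 1).
  { assert (H : d*d = (a1*a1+a2*a2+a3*a3)*((b1*b1+b2*b2+b3*b3)*(c1*c1+c2*c2+c3*c3) - (b1*c1+b2*c2+b3*c3)*(b1*c1+b2*c2+b3*c3))
       - (a1*b1+a2*b2+a3*b3)*((a1*b1+a2*b2+a3*b3)*(c1*c1+c2*c2+c3*c3) - (b1*c1+b2*c2+b3*c3)*(a1*c1+a2*c2+a3*c3))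
       + (a1*c1+a2*c2+a3*c3)*((a1*b1+a2*b2+a3*b3)*(b1*c1+b2*c2+b3*c3) - (b1*b1+b2*b2+b3*b3)*(a1*c1+a2*c2+a3*c3)))
      by (unfold d; ring).
    rewrite H11, H22, H33, H12, H13, H23 in H; lra. }
  assert (Dx : d*wx = (b2*c3-b3*c2)*(a1*wx+a2*wy+a3*wz) + (c2*a3-c3*a2)*(b1*wx+b2*wy+b3*wz) + (a2*b3-a3*b2)*(c1*wx+c2*wy+c3*wz)) by (unfold d; ring).
  assert (Dy : d*wy = (b3*c1-b1*c3)*(a1*wx+a2*wy+a3*wz) + (c3*a1-c1*a3)*(b1*wx+b2*wy+b3*wz) + (a3*b1-a1*b3)*(c1*wx+c2*wy+c3*wz)) by (unfold d; ring).
  assert (Dz : d*wz = (b1*c2-b2*c1)*(a1*wx+a2*wy+a3*wz) + (c1*a2-c2*a1)*(b1*wx+b2*wy+b3*wz) + (a1*b2-a2*b1)*(c1*wx+c2*wy+c3*wz)) by (unfold d; ring).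
  rewrite E1, E2, E3 in Dx, Dy, Dz.
  assert (wx = 0) by nra. assert (wy = 0) by nra. assert (wz = 0) by nra.
  assert (F : x*x+y*y+z*z - (u1^2+u2^2+u3^2) = x*wx+y*wy+z*wz) by (unfold wx, wy, wz, u1, u2, u3; ring).
  rewrite H, H0, H1 in F. lra.
Qed.

Lemma lin_coord (X Y Z a b c a1 a2 a3 b1 b2 b3 c1 c2 c3 : R)
  (H11 : a1*a1+a2*a2+a3*a3 = 1) (H22 : b1*b1+b2*b2+b3*b3 = 1)
  (H33 : c1*c1+c2*c2+c3*c3 = 1) (H12 : a1*b1+a2*b2+a3*b3 = 0)
  (H13 : a1*c1+a2*c2+a3*c3 = 0) (H23 : b1*c1+b2*c2+b3*c3 = 0)
  (HX : X*a1+Y*a2+Z*a3 = a) (HY : X*b1+Y*b2+Z*b3 = b) (HZ : X*c1+Y*c2+Z*c3 = c)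
  (HN : X*X+Y*Y+Z*Z = a*a+b*b+c*c) :
  X = a*a1+b*b1+c*c1 /\ Y = a*a2+b*b2+c*c2 /\ Z = a*a3+b*b3+c*c3.
Proof.
  assert (S : (X - (a*a1+b*b1+c*c1))^2 + (Y - (a*a2+b*b2+c*c2))^2 + (Z - (a*a3+b*b3+c*c3))^2
    = (X*X+Y*Y+Z*Z) - 2*(a*(X*a1+Y*a2+Z*a3) + b*(X*b1+Y*b2+Z*b3) + c*(X*c1+Y*c2+Z*c3))
      + (a*a*(a1*a1+a2*a2+a3*a3) + b*b*(b1*b1+b2*b2+b3*b3) + c*c*(c1*c1+c2*c2+c3*c3)
         + 2*a*b*(a1*b1+a2*b2+a3*b3) + 2*a*c*(a1*c1+a2*c2+a3*c3) + 2*b*c*(b1*c1+b2*c2+b3*c3))) by ring.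
  rewrite HN, HX, HY, HZ, H11, H22, H33, H12, H13, H23 in S.
  assert (S0 : (X - (a*a1+b*b1+c*c1))^2 + (Y - (a*a2+b*b2+c*c2))^2 + (Z - (a*a3+b*b3+c*c3))^2 = 0) by lra.
  assert (P1 := pow2_ge_0 (X - (a*a1+b*b1+c*c1))).
  assert (P2 := pow2_ge_0 (Y - (a*a2+b*b2+c*c2))).
  assert (P3 := pow2_ge_0 (Z - (a*a3+b*b3+c*c3))).
  repeat split; nra.
Qed.

Definition e1 : point := mkpt 1 0 0.
Definition e2 : point := mkpt 0 1 0.
Definition e3 : point := mkpt 0 0 1.

Ltac dsimp := unfold dot, psub, padd, pscale, mkpt, px, py, pz, e1, e2, e3 in *; simpl in *.

Lemma ortho6 L (HL : orthogonal_map L) :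
  let a1 := px (L e1) in let a2 := py (L e1) in let a3 := pz (L e1) in
  let b1 := px (L e2) in let b2 := py (L e2) in let b3 := pz (L e2) in
  let c1 := px (L e3) in let c2 := py (L e3) in let c3 := pz (L e3) in
  a1*a1+a2*a2+a3*a3 = 1 /\ b1*b1+b2*b2+b3*b3 = 1 /\ c1*c1+c2*c2+c3*c3 = 1 /\
  a1*b1+a2*b2+a3*b3 = 0 /\ a1*c1+a2*c2+a3*c3 = 0 /\ b1*c1+b2*c2+b3*c3 = 0.
Proof.
  intros.
  repeat split.
  - change (dot (L e1) (L e1) = 1); rewrite HL; dsimp; ring.
  - change (dot (L e2) (L e2) = 1); rewrite HL; dsimp; ring.
  - change (dot (L e3) (L e3) = 1); rewrite HL; dsimp; ring.
  - change (dot (L e1) (L e2) = 0); rewrite HL; dsimp; ring.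
  - change (dot (L e1) (L e3) = 0); rewrite HL; dsimp; ring.
  - change (dot (L e2) (L e3) = 0); rewrite HL; dsimp; ring.
Qed.

Lemma key L (HL : orthogonal_map L) (m v : point) :
  dot m (L v) = px v * dot m (L e1) + py v * dot m (L e2) + pz v * dot m (L e3).
Proof.
  destruct (ortho6 L HL) as (H11 & H22 & H33 & H12 & H13 & H23).
  destruct (lin_coord (px (L v)) (py (L v)) (pz (L v)) (px v) (py v) (pz v)
     _ _ _ _ _ _ _ _ _ H11 H22 H33 H12 H13 H23) as (EX & EY & EZ).
  - change (dot (L v) (L e1) = px v); rewrite HL; unfold dot, e1, mkpt, px, py, pz; simpl; ring.
  - change (dot (L v) (L e2) = py v); rewrite HL; unfold dot, e2, mkpt, px, py, pz; simpl; ring.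
  - change (dot (L v) (L e3) = pz v); rewrite HL; unfold dot, e3, mkpt, px, py, pz; simpl; ring.
  - change (dot (L v) (L v) = px v * px v + py v * py v + pz v * pz v); rewrite HL; reflexivity.
  - unfold dot at 1. rewrite EX, EY, EZ. unfold dot. ring.
Qed.

Lemma compl L (HL : orthogonal_map L) (m : point) :
  (dot m (L e1))^2 + (dot m (L e2))^2 + (dot m (L e3))^2 = dot m m.
Proof.
  destruct (ortho6 L HL) as (H11 & H22 & H33 & H12 & H13 & H23).
  exact (complete _ _ _ _ _ _ _ _ _ (px m) (py m) (pz m) H11 H22 H33 H12 H13 H23).
Qed.

Lemma dot_ge0 p : 0 <= dot p p.
Proof. unfold dot; nra. Qed.

Lemma dist_sq L (HL : orthogonal_map L) M O s v :
  dist3 M (padd O (pscale s (L v))) ^ 2 =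
  dot (psub M O) (psub M O) - 2 * s * (px v * dot (psub M O) (L e1) + py v * dot (psub M O) (L e2) + pz v * dot (psub M O) (L e3))
  + s * s * dot v v.
Proof.
  unfold dist3. rewrite pow2_sqrt by apply dot_ge0.
  rewrite <- key by exact HL. rewrite <- (HL v v).
  unfold dot, psub, padd, pscale, mkpt, px, py, pz; simpl. ring.
Qed.

Definition sumlist (l : list R) : R := fold_right Rplus 0 l.

Fixpoint psum (f : nat -> R) (n : nat) : R :=
  match n with O => 0 | S k => psum f k + f k end.

Lemma sumlist_perm l l' : Permutation l l' -> sumlist l = sumlist l'.
Proof. induction 1; simpl in *; lra. Qed.

Lemma build (A P : nat -> point) (N : nat)
  (HA : forall i, (i < N)%nat -> exists j, (j < N)%nat /\ A i = P j)
  (Hinj : forall i k, (i < N)%nat -> (k < N)%nat -> A i = A k -> i = k) :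
  forall n, (n <= N)%nat -> exists l, length l = n /\ NoDup l /\
    (forall j, In j l -> (j < N)%nat /\ exists i, (i < n)%nat /\ A i = P j) /\
    (forall g : point -> R, psum (fun i => g (A i)) n = sumlist (map (fun j => g (P j)) l)).
Proof.
  induction n as [|n IH]; intros Hn.
  - exists []; split; [reflexivity|split; [constructor|split; [intros j0 []|intros g; reflexivity]]].
  - destruct IH as (l & Hlen & Hnd & Hin & Hs). lia.
    destruct (HA n) as (j & Hj & Ej). lia.
    exists (j :: l). split; [|split; [|split]].
    + simpl; lia.
    + constructor; auto. intro Hjl. destruct (Hin j Hjl) as (_ & i & Hi & Ei).
      assert (i = n) by (apply Hinj; [lia|lia|congruence]). lia.
    + intros j' [<-|Hj'].
      * split; [lia|]. exists n; split; [lia|auto].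
      * destruct (Hin j' Hj') as (? & i & Hi & Ei). split; [auto|]. exists i; split; [lia|auto].
    + intro g. simpl. rewrite Hs, Ej. lra.
Qed.

Lemma perm_sum (A P : nat -> point)
  (HA : forall i, (i < 12)%nat -> exists j, (j < 12)%nat /\ A i = P j)
  (Hinj : forall i k, (i < 12)%nat -> (k < 12)%nat -> A i = A k -> i = k) (g : point -> R) :
  sum_f_R0 (fun i => g (A i)) 11 = sumlist (map (fun j => g (P j)) (seq 0 12)).
Proof.
  destruct (build A P 12 HA Hinj 12 (le_n _)) as (l & Hlen & Hnd & Hin & Hs).
  transitivity (psum (fun i => g (A i)) 12). { simpl. ring. }
  rewrite Hs. apply sumlist_perm, Permutation_map.
  apply NoDup_Permutation_bis; auto.
  - rewrite length_seq, Hlen; lia.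
  - intros j Hj. apply in_seq. destruct (Hin j Hj); lia.
Qed.

Definition Fval (lam : nat) (r s : R) : R :=
  let R0 := r*r + s*s*(1+phi*phi) in
  match lam with
  | 2%nat => 12*R0
  | 4%nat => 12*R0^2 + 4*s^2*4*(1+phi*phi)*(r*r)
  | _ => 12*R0^3 + 3*R0*4*s^2*4*(1+phi*phi)*(r*r)
  end.

Lemma total L (HL : orthogonal_map L) s M O r (Hr : dist3 M O = r) lam
  (Hlam : (lam = 2 \/ lam = 4 \/ lam = 6)%nat) :
  sumlist (map (fun j => dist3 M (padd O (pscale s (L (std_icosa j)))) ^ lam) (seq 0 12)) = Fval lam r s.
Proof.
  assert (HQ : dot (psub M O) (psub M O) = r*r).
  { rewrite <- Hr. unfold dist3. rewrite <- (pow2_sqrt _ (dot_ge0 (psub M O))) at 1. ring. }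
  pose proof (compl L HL (psub M O)) as HW.
  set (Q := dot (psub M O) (psub M O)) in *.
  set (U1 := dot (psub M O) (L e1)) in *.
  set (U2 := dot (psub M O) (L e2)) in *.
  set (U3 := dot (psub M O) (L e3)) in *.
  assert (H4 : forall p, dist3 M p ^ 4 = (dist3 M p ^ 2) ^ 2) by (intro; ring).
  assert (H6 : forall p, dist3 M p ^ 6 = (dist3 M p ^ 2) ^ 3) by (intro; ring).
  destruct Hlam as [ H | [ H | H ] ]; subst lam;
  cbn [seq map sumlist fold_right std_icosa nth std_icosa_list];
  rewrite ?H4, ?H6, !(dist_sq L HL); fold Q U1 U2 U3;
  unfold Fval; rewrite <- HQ, <- HW; unfold dot, mkpt, px, py, pz; simpl; ring.
Qed.

Theorem proposition5p1 :
  forall (A : nat -> point) (O : point),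
    regular_icosahedron A O ->
    forall r : R, 0 < r ->
    forall lam : nat, (lam = 2 \/ lam = 4 \/ lam = 6)%nat ->
    forall M N : point, dist3 M O = r -> dist3 N O = r ->
      icosa_power_sum A M lam = icosa_power_sum A N lam.
Proof.
  intros A O (s & L & Hs & HL & HA & Hinj) r Hr lam Hlam M N HM HN.
  unfold icosa_power_sum.
  rewrite (perm_sum A (fun j => padd O (pscale s (L (std_icosa j)))) HA Hinj (fun p => dist3 M p ^ lam)).
  rewrite (perm_sum A (fun j => padd O (pscale s (L (std_icosa j)))) HA Hinj (fun p => dist3 N p ^ lam)).
  rewrite (total L HL s M O r HM lam Hlam), (total L HL s N O r HN lam Hlam). reflexivity.
Qed.
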